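(* Let $\mathsf X$ be a metric space and $Q$ a transition kernel on $\mathsf X$. Then: (a) if $Q$ is strongly irreducible, then $Q$ is weakly irreducible; (b) if $Q$ is weakly irreducible, then $Q$ is open set irreducible.
   Context: $\mathscr B$ is the Borel $\sigma$-algebra of $\mathsf X$. A transition kernel on $\mathsf X$ is a map $Q:\mathsf X\times\mathscr B\to[0,1]$ that is Borel measurable in its first argument and a probability measure in its second; $Q^n$ denotes the $n$-step kernel, $Q^n(x,B)=(Q^n\mathbb 1_B)(x)$, where $Q$ also denotes the Markov operator $(Qf)(x)=\int f(x')Q(x,\mathrm dx')$ on $b\mathsf X$, the Banach space of bounded Borel measurable real functions on $\mathsf X$ with the supremum norm and pointwise order. $b\mathsf X_+$ denotes its nonnegative elements, $b\mathsf X'$ its dual, and $b\mathsf X'_+$ the positive functionals. An ideal of $b\mathsf X$ is a linear subspace $I$ with $f\in I$, $|g|\le|f|\Rightarrow g\in I$; it is invariant for $K$ if $KI\subset I$. A positive linear operator on $b\mathsf X$ is irreducible if its only invariant ideals are $\{0\}$ and $b\mathsf X$; equivalently (a standard fact), for every nonzero $f\in b\mathsf X_+$ and nonzero $\mu\in b\mathsf X'_+$ there is $m\in\mathbb N=\{1,2,\dots\}$ with $\mu(K^mf)>0$. $Q$ is strongly irreducible if its Markov operator is irreducible in this sense. $Q$ is weakly irreducible if there is a measure $\pi$ on $(\mathsf X,\mathscr B)$ such that $\pi(G)>0$ for every nonempty open $G$, and $Q$ is $\pi$-irreducible: for every $x\in\mathsf X$ and every $B\in\mathscr B$ with $\pi(B)>0$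 there is $n\in\mathbb N$ with $Q^n(x,B)>0$. A point $y$ is $Q$-reachable from $x$ if for each open neighborhood $G$ of $y$ there is $n\in\mathbb N$ with $Q^n(x,G)>0$; $Q$ is open set irreducible if every $y$ is $Q$-reachable from every $x$. *)

(* Defs.v *)
From HB Require Import structures.
From mathcomp Require Import all_boot all_order all_algebra.
From mathcomp Require Import all_classical all_reals all_analysis.

Set Implicit Arguments.
Unset Strict Implicit.
Unset Printing Implicit Defensive.

Import Order.TTheory GRing.Theory Num.Theory.

Local Open Scope classical_set_scope.
Local Open Scope ring_scope.

(* A metric space (real-valued distance), together with a distinguished point:
   MathComp-Analysis measurable types are required to be pointed (nonempty). *)
#[short(type="pointedMetricType")]
HB.structure Definition PointedMetric (K : numDomainType) :=
  {T of Pointed T & Metric K T}.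

Definition borel (R : realType) (X : pointedMetricType R) :=
  g_sigma_algebraType (@open X).

Section markov.
Context (R : realType) (X : pointedMetricType R).
Local Notation BX := (borel X).

Definition bX (f : BX -> R) : Prop :=
  measurable_fun [set: BX] f /\ exists M : R, forall x, `|f x| <= M.

Definition markov_op (Q : R.-pker BX ~> BX) (f : BX -> R) : BX -> R :=
  fun x => fine (\int[Q x]_y (f y)%:E)%E.

Definition kpow (Q : R.-pker BX ~> BX) (n : nat) (x : BX) (B : set BX) : R :=
  iter n (markov_op Q) (\1_B) x.

Definition ideal (I : set (BX -> R)) : Prop :=
  [/\ I `<=` bX,
      I (cst 0),
      (forall f g, I f -> I g -> I (f \+ g)),
      (forall (a : R) f, I f -> I (fun x => a * f x)) &
      (forall f g, I f -> bX g -> (forall x, `|g x| <= `|f x|) -> I g)].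

Definition invariant (K : (BX -> R) -> (BX -> R)) (I : set (BX -> R)) : Prop :=
  forall f, I f -> I (K f).

Definition irreducible_op (K : (BX -> R) -> (BX -> R)) : Prop :=
  forall I, ideal I -> invariant K I -> I = [set cst 0] \/ I = bX.

Definition strongly_irreducible (Q : R.-pker BX ~> BX) : Prop :=
  irreducible_op (markov_op Q).

Definition weakly_irreducible (Q : R.-pker BX ~> BX) : Prop :=
  exists pi : {measure set BX -> \bar R},
    (forall G : set X, open G -> G !=set0 -> (0 < pi G)%E) /\
    (forall (x : BX) (B : set BX), measurable B -> (0 < pi B)%E ->
       exists n : nat, (0 < n)%N /\ 0 < kpow Q n x B).

Definition reachable (Q : R.-pker BX ~> BX) (x y : X) : Prop :=
  forall G : set X, open G -> G y ->
    exists n : nat, (0 < n)%N /\ 0 < kpow Q n x G.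

Definition open_set_irreducible (Q : R.-pker BX ~> BX) : Prop :=
  forall x y : X, reachable Q x y.

End markov.

(* Main.v *)
Require Import Defs.
From HB Require Import structures.
From mathcomp Require Import all_boot all_order all_algebra.
From mathcomp Require Import all_classical all_reals all_analysis.
From mathcomp Require Import finmap measurable_realfun lra.
Import Order.TTheory GRing.Theory Num.Theory.
Local Open Scope classical_set_scope.
Local Open Scope ring_scope.

Section S.
Context (R : realType) (X : pointedMetricType R) (Q : R.-pker borel X ~> borel X).
Local Notation BX := (borel X).

Lemma bX_M (f : BX -> R) : bX f -> exists M, 0 <= M /\ forall x, `|f x| <= M.
Proof.
move=> [_ [M hM]]; exists M; split => //.
exact: le_trans (normr_ge0 _) (hM point).
Qed.

Lemma int_bound (f : BX -> R) M x : measurable_fun [set: BX] f -> (forall y, `|f y| <= M) ->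
  [/\ (0 <= \int[Q x]_y (funepos (EFin \o f) y))%E,
      (\int[Q x]_y (funepos (EFin \o f) y) <= M%:E)%E,
      (0 <= \int[Q x]_y (funeneg (EFin \o f) y))%E &
      (\int[Q x]_y (funeneg (EFin \o f) y) <= M%:E)%E].
Proof.
move=> mf hM.
have mF : measurable_fun [set: BX] (EFin \o f) by exact/measurable_EFinP.
have cstM : (\int[Q x]_(y in [set: BX]) (cst M%:E) y = M%:E)%E.
  by rewrite integral_cst // prob_kernel mule1.
have M0 : 0 <= M by exact: le_trans (normr_ge0 _) (hM point).
split.
- by apply: integral_ge0 => y _; exact: funepos_ge0.
- rewrite -[X in (_ <= X)%E]cstM; apply: (ge0_le_integral _ measurableT).
  + by move=> y _; exact: funepos_ge0.
  + exact: measurable_funepos.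
  + exact: measurable_cst.
  + move=> y _; rewrite funeposE /= ge_max !lee_fin M0 andbT.
    exact: le_trans (ler_norm _) (hM y).
- by apply: integral_ge0 => y _; exact: funeneg_ge0.
- rewrite -[X in (_ <= X)%E]cstM; apply: (ge0_le_integral _ measurableT).
  + by move=> y _; exact: funeneg_ge0.
  + exact: measurable_funeneg.
  + exact: measurable_cst.
  + move=> y _; rewrite funenegE /= ge_max !lee_fin M0 andbT.
    by apply: ler_normlW; rewrite normrN; exact: hM.
Qed.

Lemma fine_bnd (e : \bar R) M : (0 <= e)%E -> (e <= M%:E)%E ->
  e = (fine e)%:E /\ 0 <= fine e <= M.
Proof.
case: e => [r| |] //=; rewrite ?lee_fin => h1 h2; first by split => //; apply/andP.
Qed.

Lemma markov_opE (f : BX -> R) M x : measurable_fun [set: BX] f ->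
  (forall y, `|f y| <= M) ->
  markov_op Q f x = fine (\int[Q x]_y (funepos (EFin \o f) y))%E
                    - fine (\int[Q x]_y (funeneg (EFin \o f) y))%E.
Proof.
move=> mf hM; have [h1 h2 h3 h4] := int_bound f M x mf hM.
have [e1 _] := fine_bnd _ _ h1 h2; have [e2 _] := fine_bnd _ _ h3 h4.
rewrite /markov_op integralE -fineB //.
- by rewrite e1.
- by rewrite e2.
Qed.

Lemma markov_bX (f : BX -> R) : bX f -> bX (markov_op Q f).
Proof.
move=> bf; have [M [M0 hM]] := bX_M _ bf; have mf := bf.1.
have mF : measurable_fun [set: BX] (EFin \o f) by exact/measurable_EFinP.
split; last first.
  exists M => x; rewrite (markov_opE f M x mf hM).
  have [h1 h2 h3 h4] := int_bound f M x mf hM.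
  have [_ /andP[a1 a2]] := fine_bnd _ _ h1 h2; have [_ /andP[b1 b2]] := fine_bnd _ _ h3 h4.
  rewrite ler_norml; apply/andP; split; lra.
rewrite (_ : markov_op Q f = (fun x => fine (\int[Q x]_y (funepos (EFin \o f) y))%E
                    - fine (\int[Q x]_y (funeneg (EFin \o f) y))%E)); last first.
  by apply/funext => x; exact: markov_opE f M x mf hM.
apply: measurable_funB.
- apply: measurableT_comp; first exact: fine_measurable.
  apply: measurable_fun_integral_kernel.
  + exact: measurable_kernel.
  + by move=> z; exact: funepos_ge0.
  + exact: measurable_funepos.
- apply: measurableT_comp; first exact: fine_measurable.
  apply: measurable_fun_integral_kernel.
  + exact: measurable_kernel.
  + by move=> z; exact: funeneg_ge0.
  + exact: measurable_funeneg.
Qed.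


Lemma int01 (g : BX -> R) x : measurable_fun [set: BX] g ->
  (forall y, 0 <= g y <= 1) ->
  (0 <= \int[Q x]_y (g y)%:E)%E /\ (\int[Q x]_y (g y)%:E <= 1%:E)%E.
Proof.
move=> mg hg; split.
  by apply: integral_ge0 => y _; rewrite lee_fin; case/andP: (hg y).
have <- : (\int[Q x]_(y in [set: BX]) (cst 1%:E) y = 1%:E)%E.
  by rewrite integral_cst // prob_kernel mule1.
apply: (ge0_le_integral _ measurableT).
- by move=> y _; rewrite lee_fin; case/andP: (hg y).
- exact/measurable_EFinP.
- exact: measurable_cst.
- by move=> y _; rewrite lee_fin; case/andP: (hg y).
Qed.

Lemma kpow_bnd (B : set BX) n : measurable B ->
  bX (fun x => kpow Q n x B) /\ forall x, 0 <= kpow Q n x B <= 1.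
Proof.
move=> mB; elim: n => [|n [IHb IHr]].
  rewrite /kpow /=; split.
    split; first exact: measurable_indic.
    exists 1 => x; rewrite indicE; by case: (x \in B); rewrite ?normr1 ?normr0.
  by move=> x; rewrite indicE; case: (x \in B) => /=; rewrite ?ler01 ?lexx.
split; first exact: markov_bX IHb.
move=> x; rewrite /kpow iterS -/(kpow Q n ^~ B) /markov_op.
have [h1 h2] := int01 _ x IHb.1 IHr.
have [_ ->] := fine_bnd _ _ h1 h2; done.
Qed.


Lemma reach_all (Hirr : strongly_irreducible Q) x0 (B : set BX) :
  measurable B -> B !=set0 -> exists n, (0 < n)%N /\ 0 < kpow Q n x0 B.
Proof.
move=> mB [b Bb].
apply: contrapT => Hn.
pose g n := fun y => kpow Q n y B.
have H0 : forall n, (0 < n)%N -> g n x0 <= 0.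
  move=> n n0; rewrite leNgt; apply/negP => hp; apply: Hn; by exists n.
pose T := [set y | exists n, 0 < g n y].
have mgn n : measurable_fun [set: BX] (g n) := (kpow_bnd B n mB).1.1.
have g01 n y : 0 <= g n y <= 1 := (kpow_bnd B n mB).2 y.
have mT : measurable T.
  have -> : T = \bigcup_n (setT `&` (g n) @^-1` `]0, +oo[).
    apply/seteqP; split => y /=.
    - by case=> n hn; exists n => //; rewrite /= in_itv /= andbT.
    - by case=> n _ [_]; rewrite /= in_itv /= andbT => hn; exists n.
  apply: bigcupT_measurable => n; apply: (mgn n) => //; exact: measurable_itv.
have K : forall x, (forall n, (0 < n)%N -> g n x <= 0) -> Q x T = 0%E.
  move=> x hx.
  have ae n : ae_eq (Q x) setT (EFin \o g n) (cst 0%E).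
    apply/(ae_eq_integral_abs (Q x) measurableT).
      exact/measurable_EFinP.
    have [h1 h2] := int01 _ x (mgn n) (g01 n).
    have [e1 /andP[f1 _]] := fine_bnd _ _ h1 h2.
    have f2 : fine (\int[Q x]_y (g n y)%:E)%E <= 0 by exact: hx n.+1 isT.
    rewrite (eq_integral (fun y => (g n y)%:E)); last first.
      by move=> y _; rewrite gee0_abs // lee_fin; case/andP: (g01 n y).
    by rewrite e1 (_ : fine _ = 0) //; apply/eqP; rewrite eq_le f1 f2.
  have := ae_foralln (P := fun n y => setT y -> (EFin \o g n) y = cst 0%E y) ae.
  case=> N [mN N0 sub].
  apply/eqP; rewrite -measure_le0 -N0 le_measure //; try exact/mem_set.
  move=> y [n hn]; apply: sub => /= hall.
  have := hall n I; move/eqP; rewrite eqe => /eqP e.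
  by rewrite e ltxx in hn.
pose S0 := ~` T.
pose Id := fun f : BX -> R => bX f /\ (forall y, S0 y -> f y = 0).
have hQS x : S0 x -> Q x T = 0%E.
  move=> Sx; apply: K => n _; rewrite leNgt; apply/negP => hp; apply: Sx; by exists n.
have idI : ideal Id.
  split.
  - by move=> f [].
  - split; [split; [exact: measurable_cst | by exists 0 => x; rewrite normr0]|by []].
  - move=> f h [[mf [M1 h1]] z1] [[mh [M2 h2]] z2]; split; [split|].
    + exact: measurable_funD.
    + exists (M1 + M2) => x; exact: le_trans (ler_normD _ _) (lerD (h1 x) (h2 x)).
    + by move=> y Sy; rewrite /= z1 // z2 // addr0.
  - move=> a f [[mf [M1 h1]] z1]; split; [split|].
    + exact: measurable_funM (measurable_cst a) mf.
    + by exists (`|a| * M1) => x; rewrite normrM ler_wpM2l.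
    + by move=> y Sy; rewrite z1 // mulr0.
  - move=> f h [bf z1] bh hle; split => // y Sy.
    by move: (hle y); rewrite z1 // normr0 normr_le0 => /eqP.
have invI : Defs.invariant (markov_op Q) Id.
  move=> f [bf z1]; split; first exact: markov_bX bf.
  move=> x Sx; have [M [M0 hM]] := bX_M _ bf.
  rewrite (markov_opE f M x bf.1 hM).
  have QT := hQS x Sx.
  have mF : measurable_fun [set: BX] (EFin \o f) by apply/measurable_EFinP; exact: bf.1.
  have E0 (F : BX -> \bar R) : measurable_fun setT F ->
      (forall y, S0 y -> F y = 0%E) -> (\int[Q x]_y F y = 0)%E.
    move=> mF' hF.
    rewrite (@ae_eq_integral _ _ _ (Q x) setT (cst 0%E) F measurableT mF' (measurable_cst _)) ?integral0 //.
    exists T; split => // y /= hy; apply: contrapT => nTy; apply: hy => _.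
    exact: hF.
  rewrite !E0 /= ?subrr //.
  - exact: measurable_funeneg.
  - by move=> y Sy; rewrite funenegE /= z1 // ?oppe0 ?oppr0 maxxx.
  - exact: measurable_funepos.
  - by move=> y Sy; rewrite funeposE /= z1 // maxxx.
have [I0|IbX] := Hirr Id idI invI.
- have : Id (\1_B).
    split; first exact: (kpow_bnd B 0 mB).1.
    move=> y Sy.
    have h : ~ (0 < g 0%N y) by move=> hp; apply: Sy; exists 0%N.
    have /andP[h0 _] := g01 0%N y.
    apply/eqP; rewrite eq_le h0 andbT leNgt; exact/negP.
  rewrite I0 => /= /(congr1 (fun f => f b)) /=; rewrite indicE mem_set //.
  by move/eqP; rewrite oner_eq0.
- have : bX (cst 1 : BX -> R).
    by split; [exact: measurable_cst| exists 1 => x; rewrite normr1].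
  rewrite -IbX => -[_ z1].
  have Tall : T = setT.
    apply/seteqP; split => // y _; apply: contrapT => nT.
    by have := z1 y nT; apply/eqP; exact: oner_neq0.
  have := K x0 H0; rewrite Tall prob_kernel => /eqP; rewrite eqe oner_eq0.
  done.
Qed.

End S.

Theorem lemma4p3 (R : realType) (X : pointedMetricType R)
    (Q : R.-pker borel X ~> borel X) :
  (strongly_irreducible Q -> weakly_irreducible Q) /\
  (weakly_irreducible Q -> open_set_irreducible Q).
Proof.
split.
- move=> Hirr; exists (@counting (borel X) R); split.
  + move=> G oG [g Gg]; rewrite /counting /=.
    have [fG|nfG] := pselect (finite_set G); unfold counting; cbv beta;
      last by rewrite asboolF.
    rewrite asboolT //.
    rewrite lte_fin ltr0n cardfs_gt0; apply/eqP => e.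
    by have := in_fset_set fG g; rewrite e inE mem_set.
  + move=> x B mB pB; apply: (@reach_all R X Q Hirr x B mB).
    apply/set0P; apply/eqP => B0; move: pB; rewrite B0 measure0 ltxx.
    done.
- move=> [pi [hpos hirr]] x y G oG Gy; apply: hirr.
  + exact: sub_sigma_algebra.
  + by apply: hpos => //; exists y.
Qed.
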